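(* Consider the outlier-robust estimation problem \[ \min_{\mathbf{x}\in\mathcal{X}\subseteq\mathbb{R}^d}\ \sum_{i=1}^N \rho\big(r(\mathbf{x},\mathbf{z}_i),\beta_i\big)+\psi(\mathbf{x}), \] where $\mathbf{z}_1,\dots,\mathbf{z}_N$ are given measurements, $\beta_i>0$ are given thresholds, $r(\mathbf{x},\mathbf{z}_i)$ is a scalar residual, and $\psi$ is a regularizer. Assume that (a) $r^2(\cdot,\mathbf{z}_i)$ (for each $i$) and $\psi$ are polynomials in $\mathbf{x}$, and (b) $\mathcal{X}=\{\mathbf{x}\in\mathbb{R}^d \mid h_k(\mathbf{x})=0,\ k=1,\dots,l_h,\ g_j(\mathbf{x})\ge 0,\ j=1,\dots,l_g\}$ for finitely many polynomials $h_k,g_j$. If the cost $\rho$ is one of (i) truncated least squares $\rho_{\mathrm{TLS}}(r,\beta_i)=\min\{r^2/\beta_i^2,1\}$; (ii) maximum consensus $\rho_{\mathrm{MC}}(r,\beta_i)=0$ if $|r|\le\beta_i$ and $1$ otherwise; (iii) Geman–McClure $\rho_{\mathrm{GM}}(r,\beta_i)=\dfrac{r^2/\beta_i^2}{1+r^2/\beta_i^2}$; (iv) Tukey's biweight $\rho_{\mathrm{TB}}(r,\beta_i)=\frac{r^2}{\beta_i^2}-\frac{r^4}{\beta_i^4}+\frac{r^6}{3\beta_i^6}$ if $|r|\le\beta_i$ and $\frac13$ otherwise, then the problem can be equivalently recast as a polynomial optimization problem (minimization of a polynomial subject to finitely many polynomial equality and inequality constraints) in $d+N$ variables $(\mathbf{x},\boldsymbol{\theta})\in\mathbb{R}^{d}\times\mathbb{R}^N$,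 where each additional variable $\theta_i$ indicates the confidence of measurement $\mathbf{z}_i$ being an inlier. Moreover, if $\rho$ is one of (v) L1: $\rho_{\mathrm{L1}}(r,\beta_i)=|r|/\beta_i$; (vi) Huber: $\rho_{\mathrm{HB}}(r,\beta_i)=\frac{r^2}{2\beta_i^2}$ if $|r|\le\beta_i$ and $\frac{|r|}{\beta_i}-\frac12$ otherwise; (vii) adaptive: $\rho_{\mathrm{ADT},s}(r,\beta_i)=\frac{|s-2|}{s}\Big(\big(\frac{r^2/\beta_i^2}{|s-2|}+1\big)^{s/2}-1\Big)$ for a given scale parameter $s\in\mathbb{Q}\setminus\{0,2\}$, then the problem can also be equivalently written as a polynomial optimization problem, obtained by adding slack variable(s) for each measurement.
   Context: A polynomial optimization problem (POP) is a problem of the form $\min_{\mathbf{w}\in\mathbb{R}^n}\{p(\mathbf{w}) \mid h_k(\mathbf{w})=0,\ g_j(\mathbf{w})\ge 0\}$ with $p,h_k,g_j$ real polynomials. ''Equivalently recast'' means the optimal values coincide and minimizers of the original problem correspond to the $\mathbf{x}$-components of minimizers of the POP. *)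

(* Defs.v *)
(* Real powers with real exponent use Stdlib's Rpower (defined for x > 0). *)
From HB Require Import structures.
From mathcomp Require Import all_boot all_order all_algebra.
From mathcomp Require Import mpoly.
From mathcomp Require Import Rstruct.
From Stdlib Require Rdefinitions Rpower.

Set Implicit Arguments.
Unset Strict Implicit.
Unset Printing Implicit Defensive.

Import Order.TTheory GRing.Theory Num.Theory.
Local Open Scope ring_scope.

Notation R := Rdefinitions.R.

Definition rho_TLS (r beta : R) : R := Num.min (r ^+ 2 / beta ^+ 2) 1.

Definition rho_MC (r beta : R) : R := if `|r| <= beta then 0 else 1.

Definition rho_GM (r beta : R) : R :=
  (r ^+ 2 / beta ^+ 2) / (1 + r ^+ 2 / beta ^+ 2).

Definition rho_TB (r beta : R) : R :=
  if `|r| <= beta then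
    r ^+ 2 / beta ^+ 2 - r ^+ 4 / beta ^+ 4 + r ^+ 6 / (3 * beta ^+ 6)
  else 1 / 3.

Definition rho_L1 (r beta : R) : R := `|r| / beta.

Definition rho_HB (r beta : R) : R :=
  if `|r| <= beta then r ^+ 2 / (2 * beta ^+ 2) else `|r| / beta - 1 / 2.

(* (vii) adaptive, with scale parameter s (a rational number, s <> 0, 2).
   The base ((r^2/beta^2)/|s-2| + 1) is >= 1 > 0, so Rpower is the usual
   real power. *)
Definition rho_ADT (s : rat) (r beta : R) : R :=
  let sR : R := ratr s in
  (`|sR - 2| / sR) *
  (Rpower.Rpower ((r ^+ 2 / beta ^+ 2) / `|sR - 2| + 1) (sR / 2) - 1).

Record POP (n : nat) := mkPOP {
  pop_obj  : {mpoly R[n]};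
  pop_eq   : seq {mpoly R[n]};
  pop_ineq : seq {mpoly R[n]}
}.

Definition pop_feasible (n : nat) (P : POP n) (w : 'I_n -> R) : Prop :=
  (forall h, h \in pop_eq P -> h.@[w] = 0) /\
  (forall g, g \in pop_ineq P -> 0 <= g.@[w]).

Definition concatv (d m : nat) (x : 'I_d -> R) (y : 'I_m -> R)
  : 'I_(d + m) -> R :=
  fun i => match split i with inl j => x j | inr j => y j end.

Definition is_minimizer (T : Type) (X : T -> Prop) (f : T -> R) (x : T)
  : Prop := X x /\ (forall y, X y -> f x <= f y).

(* Equality of the optimal values (infima, in the extended reals,
   with inf of the empty set = +oo):  inf_X f = inf_Y g  iff for every
   real c, some feasible point of the first problem has value < c exactly
   when some feasible point of the second one does. *)
Definition same_optimal_value (T U : Type) (X : T -> Prop) (f : T -> R)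
  (Y : U -> Prop) (g : U -> R) : Prop :=
  forall c : R, (exists x, X x /\ f x < c) <-> (exists u, Y u /\ g u < c).

(* "min_{x in X} f(x) is equivalently recast as the POP P in d + m
   variables (x, y)": optimal values coincide, and x is a minimizer of
   the original problem iff it is the x-component of a minimizer of P. *)
Definition recast_as_POP (d m : nat) (X : ('I_d -> R) -> Prop)
  (f : ('I_d -> R) -> R) (P : POP (d + m)) : Prop :=
  same_optimal_value X f (pop_feasible P) (fun w => (pop_obj P).@[w]) /\
  (forall x : 'I_d -> R,
     is_minimizer X f x <->
     exists y : 'I_m -> R,
       is_minimizer (pop_feasible P) (fun w => (pop_obj P).@[w])
         (concatv x y)).

Definition basic_semialg (d : nat) (hs gs : seq {mpoly R[d]})
  (x : 'I_d -> R) : Prop :=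
  (forall h, h \in hs -> h.@[x] = 0) /\ (forall g, g \in gs -> 0 <= g.@[x]).

Definition robust_cost (d N : nat) (Z : Type) (rho : R -> R -> R)
  (r : ('I_d -> R) -> Z -> R) (z : 'I_N -> Z) (beta : 'I_N -> R)
  (psi : ('I_d -> R) -> R) (x : 'I_d -> R) : R :=
  \sum_(i < N) rho (r x (z i)) (beta i) + psi x.

(* Main.v *)
Require Import Defs.
From HB Require Import structures.
From mathcomp Require Import all_boot all_order all_algebra.
From mathcomp Require Import mpoly.
From mathcomp Require Import Rstruct.
From mathcomp Require Import ring lra.
From Stdlib Require Import FunctionalExtensionality.
From Stdlib Require Rdefinitions Rpower Rfunctions Exp_prop.
Notation Rpower := Rpower.Rpower.
Set Implicit Arguments. Unset Strict Implicit. Unset Printing Implicit Defensive.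
Import Order.TTheory GRing.Theory Num.Theory.
Local Open Scope ring_scope.


Definition liftp d m (q : {mpoly R[d]}) : {mpoly R[d+m]} :=
  comp_mpoly [tuple 'X_(lshift m i) | i < d] q.

Lemma concatv_l d m (x : 'I_d -> R) (y : 'I_m -> R) i : concatv x y (lshift m i) = x i.
Proof. by rewrite /concatv -[lshift m i]/(unsplit (inl _ i)) unsplitK. Qed.
Lemma concatv_r d m (x : 'I_d -> R) (y : 'I_m -> R) i : concatv x y (rshift d i) = y i.
Proof. by rewrite /concatv -[rshift d i]/(unsplit (inr _ i)) unsplitK. Qed.

Lemma liftpE d m q (x : 'I_d -> R) (y : 'I_m -> R) : (liftp m q).@[concatv x y] = q.@[x].
Proof.
rewrite /liftp comp_mpoly_meval; apply: meval_eq => i.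
by rewrite tnth_mktuple mevalXU concatv_l.
Qed.

Lemma concatv_surj d m (w : 'I_(d+m) -> R) :
  w = concatv (fun i => w (lshift m i)) (fun i => w (rshift d i)).
Proof.
apply: functional_extensionality => i; rewrite /concatv.
by case: splitP => j Hj; congr w; apply: val_inj; rewrite /= Hj.
Qed.

Lemma recast_gen d m (hs gs : seq {mpoly R[d]}) (f : ('I_d -> R) -> R)
  (obj : {mpoly R[d+m]}) (es is_ : seq {mpoly R[d+m]}) :
  (forall x y, (forall e, e \in es -> e.@[concatv x y] = 0) ->
     (forall g, g \in is_ -> 0 <= g.@[concatv x y]) -> f x <= obj.@[concatv x y]) ->
  (forall x, exists y, [/\ (forall e, e \in es -> e.@[concatv x y] = 0),
     (forall g, g \in is_ -> 0 <= g.@[concatv x y]) & obj.@[concatv x y] = f x]) ->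
  recast_as_POP (basic_semialg hs gs) f
    (mkPOP obj (map (liftp m) hs ++ es) (map (liftp m) gs ++ is_)).
Proof.
move=> HA HB.
have feasE : forall x y, pop_feasible (mkPOP obj (map (liftp m) hs ++ es) (map (liftp m) gs ++ is_)) (concatv x y) <->
   basic_semialg hs gs x /\ ((forall e, e \in es -> e.@[concatv x y] = 0) /\
     (forall g, g \in is_ -> 0 <= g.@[concatv x y])).
  move=> x y; rewrite /pop_feasible /basic_semialg /=; split.
    case=> H1 H2; split; split.
    - by move=> h hh; rewrite -(liftpE h x y); apply: H1; rewrite mem_cat map_f.
    - by move=> h hh; rewrite -(liftpE h x y); apply: H2; rewrite mem_cat map_f.
    - by move=> e he; apply: H1; rewrite mem_cat he orbT.
    - by move=> e he; apply: H2; rewrite mem_cat he orbT.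
  case=> [[H1 H2] [H3 H4]]; split.
    move=> h; rewrite mem_cat => /orP [/mapP [h' h'in ->]|]; last exact: H3.
    by rewrite liftpE; apply: H1.
  move=> h; rewrite mem_cat => /orP [/mapP [h' h'in ->]|]; last exact: H4.
  by rewrite liftpE; apply: H2.
split.
  move=> c; split.
    case=> x [Xx fx]; have [y [H1 H2 H3]] := HB x.
    by exists (concatv x y); split; [apply/feasE | rewrite /= H3].
  case=> w [Fw gw]; rewrite (concatv_surj w) in Fw gw.
  set x := (fun i => w (lshift m i)) in Fw gw; set y := (fun i => w (rshift d i)) in Fw gw.
  have [Xx [H1 H2]] := (feasE x y).1 Fw.
  exists x; split => //; exact: le_lt_trans (HA x y H1 H2) gw.
move=> x; split.
  case=> Xx Hmin; have [y [H1 H2 H3]] := HB x.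
  exists y; split; first by apply/feasE.
  move=> w Fw; rewrite /= H3 (concatv_surj w); rewrite (concatv_surj w) in Fw.
  have [Xx' [H1' H2']] := (feasE _ _).1 Fw.
  exact: le_trans (Hmin _ Xx') (HA _ _ H1' H2').
case=> y [Fw Hmin]; have [Xx [H1 H2]] := (feasE x y).1 Fw.
split => // x' Xx'; have [y' [H1' H2' H3']] := HB x'.
apply: le_trans (HA x y H1 H2) _; rewrite -H3'.
by apply: Hmin; apply/feasE.
Qed.


Lemma recast_meas d m N (Z : Type) (z : 'I_N -> Z) (beta : 'I_N -> R)
  (r : ('I_d -> R) -> Z -> R) (psi : ('I_d -> R) -> R) (rho : R -> R -> R)
  (hs gs : seq {mpoly R[d]}) (psiq : {mpoly R[d]})
  (hpsi : forall x, psiq.@[x] = psi x)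
  (E I : 'I_N -> seq {mpoly R[d+m]}) (T : 'I_N -> {mpoly R[d+m]}) :
  (forall x y i, (forall e, e \in E i -> e.@[concatv x y] = 0) ->
     (forall g, g \in I i -> 0 <= g.@[concatv x y]) ->
     rho (r x (z i)) (beta i) <= (T i).@[concatv x y]) ->
  (forall x, exists y, forall i, [/\ (forall e, e \in E i -> e.@[concatv x y] = 0),
     (forall g, g \in I i -> 0 <= g.@[concatv x y]) &
     (T i).@[concatv x y] = rho (r x (z i)) (beta i)]) ->
  exists P : POP (d + m),
    recast_as_POP (basic_semialg hs gs) (robust_cost rho r z beta psi) P.
Proof.
move=> HA HB.
exists (mkPOP (liftp m psiq + \sum_(i < N) T i)
   (map (liftp m) hs ++ flatten [seq E i | i <- enum 'I_N])
   (map (liftp m) gs ++ flatten [seq I i | i <- enum 'I_N])).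
have objE x y : (liftp m psiq + \sum_(i < N) T i).@[concatv x y] =
   psi x + \sum_(i < N) (T i).@[concatv x y].
  rewrite mevalD (liftpE psiq x y) hpsi; congr (_ + _); rewrite raddf_sum //.
have inE i : i \in enum 'I_N by rewrite mem_enum.
apply: recast_gen.
  move=> x y H1 H2; rewrite objE /robust_cost addrC lerD2l.
  apply: ler_sum => i _; apply: HA.
    by move=> e he; apply: H1; apply/flattenP; exists (E i) => //; rewrite map_f.
  by move=> e he; apply: H2; apply/flattenP; exists (I i) => //; rewrite map_f.
move=> x; have [y Hy] := HB x; exists y; split.
- move=> e /flattenP [s /mapP [i _ ->]] he; by have [H1 _ _] := Hy i; apply: H1.
- move=> e /flattenP [s /mapP [i _ ->]] he; by have [_ H1 _] := Hy i; apply: H1.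
- rewrite objE /robust_cost addrC; congr (_ + _); apply: eq_bigr => i _.
  by have [_ _ ->] := Hy i.
Qed.

Lemma mevalM' n (v : 'I_n -> R) (p q : {mpoly R[n]}) : (p * q).@[v] = p.@[v] * q.@[v].
Proof. exact: mevalM. Qed.
Lemma mevalXn' n (v : 'I_n -> R) (p : {mpoly R[n]}) k : (p ^+ k).@[v] = p.@[v] ^+ k.
Proof. exact: rmorphXn. Qed.

Fact Upol_key : unit. Proof. exact: tt. Qed.
Definition Upol_def d m (q : {mpoly R[d]}) (b : R) : {mpoly R[d+m]} :=
  liftp m q * ((b ^+ 2)^-1)%:MP.
Definition Upol := locked_with Upol_key Upol_def.
Arguments Upol {d} m q b.

Lemma UpolE d m (q : {mpoly R[d]}) b (x : 'I_d -> R) (y : 'I_m -> R) :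
  (Upol m q b).@[concatv x y] = q.@[x] / b ^+ 2.
Proof. by rewrite /Upol unlock /Upol_def mevalM mevalC liftpE. Qed.

Lemma XrE d m j (x : 'I_d -> R) (y : 'I_m -> R) :
  ('X_(rshift d j) : {mpoly R[d+m]}).@[concatv x y] = y j.
Proof. by rewrite mevalXU concatv_r. Qed.

Lemma bool01 (t : R) : t ^+ 2 - t = 0 -> t = 0 \/ t = 1.
Proof.
move=> h; have : t * (t - 1) = 0 by rewrite mulrBr mulr1 -expr2.
by move/eqP; rewrite mulf_eq0 subr_eq0 => /orP [/eqP|/eqP]; [left|right].
Qed.

Lemma bool_scheme d N (Z : Type) (z : 'I_N -> Z) (beta : 'I_N -> R)
  (r : ('I_d -> R) -> Z -> R) (psi : ('I_d -> R) -> R) (rho : R -> R -> R)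
  (hs gs : seq {mpoly R[d]}) (psiq : {mpoly R[d]})
  (hpsi : forall x, psiq.@[x] = psi x)
  (q : 'I_N -> {mpoly R[d]}) (hq : forall x i, (q i).@[x] = r x (z i) ^+ 2)
  (hbeta : forall i, 0 < beta i)
  (FA FB : {mpoly R[d+N]} -> {mpoly R[d+N]}) (fa fb : R -> R)
  (hFA : forall p v, (FA p).@[v] = fa p.@[v])
  (hFB : forall p v, (FB p).@[v] = fb p.@[v])
  (hrho : forall rr b, 0 < b -> rho rr b =
      if rr ^+ 2 / b ^+ 2 <= 1 then fa (rr ^+ 2 / b ^+ 2) else fb (rr ^+ 2 / b ^+ 2))
  (hab : forall u, 0 <= u -> u <= 1 -> fa u <= fb u) :
  exists P : POP (d + N),
    recast_as_POP (basic_semialg hs gs) (robust_cost rho r z beta psi) P.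
Proof.
pose Th i : {mpoly R[d+N]} := 'X_(rshift d i).
pose U i : {mpoly R[d+N]} := Upol N (q i) (beta i).
apply: (@recast_meas d N N Z z beta r psi rho hs gs psiq hpsi
   (fun i => [:: Th i ^+ 2 - Th i]) (fun i => [:: Th i * (1 - U i)])
   (fun i => Th i * FA (U i) + (1 - Th i) * FB (U i))).
  move=> x y i H1 H2.
  have := H1 _ (mem_head _ _); have := H2 _ (mem_head _ _).
  rewrite !(mevalB, mevalM', mevalD, mevalXn', meval1, hFA, hFB) /Th /U !XrE !UpolE hq hrho //.
  set u := _ / _; move=> Hg /bool01 [E|E]; rewrite E in Hg *.
    by rewrite mul0r add0r subr0 mul1r; case: ifP => // /[dup] ? /hab -> //; rewrite divr_ge0 ?sqr_ge0.
  rewrite mul1r subrr mul0r addr0 mul1r in Hg *.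
  by rewrite subr_ge0 in Hg; rewrite Hg.
move=> x; exists (fun i => if r x (z i) ^+ 2 / beta i ^+ 2 <= 1 then 1 else 0) => i.
split.
- move=> e; rewrite inE => /eqP ->.
  by rewrite !(mevalB, mevalXn') /Th !XrE; case: ifP => _; rewrite ?expr1n ?expr0n ?subrr.
- move=> e; rewrite inE => /eqP ->.
  rewrite !(mevalB, mevalM', meval1) /Th /U !XrE !UpolE hq.
  by case: ifP => h; rewrite ?mul0r // mul1r subr_ge0.
- rewrite !(mevalB, mevalM', mevalD, meval1, hFA, hFB) /Th /U !XrE !UpolE hq hrho //.
  by case: ifP => _; rewrite ?subrr ?subr0 ?mul0r ?mul1r ?addr0 ?add0r.
Qed.

Lemma absle (rr b : R) : 0 < b -> (`|rr| <= b) = (rr ^+ 2 / b ^+ 2 <= 1).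
Proof.
move=> hb; rewrite ler_pdivrMr ?exprn_gt0 // mul1r -real_normK ?num_real //.
by rewrite ler_sqr // nnegrE ?normr_ge0 ?ltW.
Qed.

Lemma u_ge0 (rr b : R) : 0 <= rr ^+ 2 / b ^+ 2.
Proof. by rewrite divr_ge0 ?sqr_ge0. Qed.

Lemma part1 d N (Z : Type) (z : 'I_N -> Z) (beta : 'I_N -> R)
  (r : ('I_d -> R) -> Z -> R) (psi : ('I_d -> R) -> R) (rho : R -> R -> R)
  (hs gs : seq {mpoly R[d]}) (psiq : {mpoly R[d]})
  (hpsi : forall x, psiq.@[x] = psi x)
  (q : 'I_N -> {mpoly R[d]}) (hq : forall x i, (q i).@[x] = r x (z i) ^+ 2)
  (hbeta : forall i, 0 < beta i) :
  [\/ rho = rho_TLS, rho = rho_MC, rho = rho_GM | rho = rho_TB] ->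
  exists P : POP (d + N),
    recast_as_POP (basic_semialg hs gs) (robust_cost rho r z beta psi) P.
Proof.
case=> ->.
- apply: (@bool_scheme d N Z z beta r psi _ hs gs psiq hpsi q hq hbeta id (fun _ => 1) id (fun _ => 1)).
  + by [].
  + by move=> p v; rewrite meval1.
  + by move=> rr b hb; rewrite /rho_TLS minEle.
  + by [].
- apply: (@bool_scheme d N Z z beta r psi _ hs gs psiq hpsi q hq hbeta (fun _ => 0) (fun _ => 1) (fun _ => 0) (fun _ => 1)).
  + by move=> p v; rewrite meval0.
  + by move=> p v; rewrite meval1.
  + by move=> rr b hb; rewrite /rho_MC absle.
  + by [].
- pose Th i : {mpoly R[d+N]} := 'X_(rshift d i).
  pose U i : {mpoly R[d+N]} := Upol N (q i) (beta i).
  apply: (@recast_meas d N N Z z beta r psi rho_GM hs gs psiq hpsi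
     (fun i => [:: Th i * (1 + U i) - 1]) (fun i => [::]) (fun i => 1 - Th i)).
    move=> x y i H1 _; have := H1 _ (mem_head _ _).
    rewrite !(mevalB, mevalM', mevalD, meval1) /Th /U !XrE !UpolE hq /rho_GM.
    have := u_ge0 (r x (z i)) (beta i).
    set u := _ / _; move=> u0 E.
    have h : 1 + u != 0 by rewrite gt_eqF // ltr_pwDl.
    have -> : y i = (1 + u)^-1.
      by apply: (mulIf h); rewrite mulVf //; apply/eqP; rewrite -subr_eq0 E.
    by rewrite le_eqVlt; apply/orP; left; apply/eqP; field.
  move=> x; exists (fun i => (1 + r x (z i) ^+ 2 / beta i ^+ 2)^-1) => i; split => //.
  + move=> e; rewrite inE => /eqP ->.
    rewrite !(mevalB, mevalM', mevalD, meval1) /Th /U !XrE !UpolE hq.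
    have := u_ge0 (r x (z i)) (beta i); set u := _ / _; move=> u0.
    have h : 1 + u != 0 by rewrite gt_eqF // ltr_pwDl.
    by rewrite mulVf // subrr.
  + rewrite !(mevalB, mevalM', mevalD, meval1) /Th /U !XrE /rho_GM.
    have := u_ge0 (r x (z i)) (beta i); set u := _ / _; move=> u0.
    have h : 1 + u != 0 by rewrite gt_eqF // ltr_pwDl.
    by field.
- apply: (@bool_scheme d N Z z beta r psi _ hs gs psiq hpsi q hq hbeta 
    (fun p => p - p ^+ 2 + p ^+ 3 * (3^-1)%:MP) (fun _ => (3^-1)%:MP)
    (fun u => u - u ^+ 2 + u ^+ 3 * 3^-1) (fun _ => 3^-1)).
  + by move=> p v; rewrite !(mevalB, mevalD, mevalM', mevalXn', mevalC).
  + by move=> p v; rewrite mevalC.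
  + move=> rr b hb; rewrite /rho_TB absle //; case: ifP => _; last by rewrite div1r.
    have h : b != 0 by rewrite gt_eqF.
    by field.
  + move=> u u0 u1.
    have : (u - 1) ^+ 3 <= 0.
      by rewrite exprS mulr_le0_ge0 ?sqr_ge0 // subr_le0.
    move=> H; lra.
Qed.


Lemma troot (t rr b : R) : 0 < b -> 0 <= t -> t ^+ 2 - rr ^+ 2 / b ^+ 2 = 0 -> t = `|rr| / b.
Proof.
move=> hb ht /eqP; rewrite subr_eq0 => /eqP E.
apply: (pexpIrn (n := 2)) => //; rewrite ?nnegrE ?divr_ge0 ?normr_ge0 ?ltW //.
by rewrite /= E expr_div_n real_normK ?num_real.
Qed.

Lemma tdef (rr b : R) : 0 < b -> (`|rr| / b) ^+ 2 - rr ^+ 2 / b ^+ 2 = 0.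
Proof. by move=> hb; rewrite expr_div_n real_normK ?num_real // subrr. Qed.

Lemma L1case d N (Z : Type) (z : 'I_N -> Z) (beta : 'I_N -> R)
  (r : ('I_d -> R) -> Z -> R) (psi : ('I_d -> R) -> R)
  (hs gs : seq {mpoly R[d]}) (psiq : {mpoly R[d]})
  (hpsi : forall x, psiq.@[x] = psi x)
  (q : 'I_N -> {mpoly R[d]}) (hq : forall x i, (q i).@[x] = r x (z i) ^+ 2)
  (hbeta : forall i, 0 < beta i) :
  exists P : POP (d + N),
    recast_as_POP (basic_semialg hs gs) (robust_cost rho_L1 r z beta psi) P.
Proof.
pose Th i : {mpoly R[d+N]} := 'X_(rshift d i).
pose U i : {mpoly R[d+N]} := Upol N (q i) (beta i).
apply: (@recast_meas d N N Z z beta r psi rho_L1 hs gs psiq hpsi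
   (fun i => [:: Th i ^+ 2 - U i]) (fun i => [:: Th i]) (fun i => Th i)).
  move=> x y i H1 H2; have := H1 _ (mem_head _ _); have := H2 _ (mem_head _ _).
  rewrite !(mevalB, mevalXn') /Th /U !XrE !UpolE hq => t0 E.
  by rewrite (troot (hbeta i) t0 E).
move=> x; exists (fun i => `|r x (z i)| / beta i) => i; split.
- move=> e; rewrite inE => /eqP ->.
  by rewrite !(mevalB, mevalXn') /Th /U !XrE !UpolE hq tdef.
- move=> e; rewrite inE => /eqP ->.
  by rewrite /Th XrE divr_ge0 ?normr_ge0 ?ltW.
- by rewrite /Th XrE.
Qed.

Lemma HBE (rr b : R) : 0 < b -> rho_HB rr b =
  if `|rr| / b <= 1 then (`|rr| / b) ^+ 2 / 2 else `|rr| / b - 2^-1.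
Proof.
move=> hb; rewrite /rho_HB ler_pdivrMr // [1 * b]mul1r div1r.
have h : b != 0 by rewrite gt_eqF.
case: ifP => _; last by [].
by rewrite expr_div_n real_normK ?num_real //; field.
Qed.

Lemma HBcase d N (Z : Type) (z : 'I_N -> Z) (beta : 'I_N -> R)
  (r : ('I_d -> R) -> Z -> R) (psi : ('I_d -> R) -> R)
  (hs gs : seq {mpoly R[d]}) (psiq : {mpoly R[d]})
  (hpsi : forall x, psiq.@[x] = psi x)
  (q : 'I_N -> {mpoly R[d]}) (hq : forall x i, (q i).@[x] = r x (z i) ^+ 2)
  (hbeta : forall i, 0 < beta i) :
  exists P : POP (d + (N + N)),
    recast_as_POP (basic_semialg hs gs) (robust_cost rho_HB r z beta psi) P.
Proof.
pose Th i : {mpoly R[d+(N+N)]} := 'X_(rshift d (lshift N i)).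
pose Tt i : {mpoly R[d+(N+N)]} := 'X_(rshift d (rshift N i)).
pose U i : {mpoly R[d+(N+N)]} := Upol (N+N) (q i) (beta i).
apply: (@recast_meas d (N+N) N Z z beta r psi rho_HB hs gs psiq hpsi
   (fun i => [:: Th i ^+ 2 - Th i; Tt i ^+ 2 - U i])
   (fun i => [:: Tt i; Th i * (1 - Tt i); (1 - Th i) * (Tt i - 1)])
   (fun i => Th i * (Tt i ^+ 2 * (2^-1)%:MP) + (1 - Th i) * (Tt i - (2^-1)%:MP))).
  move=> x y i H1 H2.
  have := H1 _ (mem_head _ _); have := H1 (Tt i ^+ 2 - U i); rewrite !inE eqxx orbT => /(_ isT).
  have := H2 _ (mem_head _ _); have := H2 (Th i * (1 - Tt i)); rewrite !inE eqxx orbT => /(_ isT).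
  have := H2 ((1 - Th i) * (Tt i - 1)); rewrite !inE eqxx !orbT => /(_ isT).
  rewrite !(mevalB, mevalD, mevalM', mevalXn', meval1, mevalC) /Th /Tt /U !XrE !UpolE hq HBE //.
  move=> G3 G2 G1 E2 E1.
  rewrite -(troot (hbeta i) G1 E2).
  set t := y (rshift N i) in G2 G3 *.
  have [E|E] := bool01 E1; rewrite E in G2 G3 *.
    rewrite mul0r add0r subr0 mul1r.
    rewrite subr0 mul1r subr_ge0 in G3.
    case: ifP => h; last by [].
    have -> : t = 1 by apply/le_anti; rewrite h G3.
    by rewrite expr1n le_eqVlt; apply/orP; left; apply/eqP; field.
  rewrite mul1r subrr mul0r addr0 mul1r subr_ge0 in G2 *.
  by rewrite G2 mulrC.
move=> x; pose t i := `|r x (z i)| / beta i.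
exists (concatv (fun i => if t i <= 1 then 1 else 0) t) => i.
have tE : ('X_(rshift d (rshift N i)) : {mpoly R[d+(N+N)]}).@[
   concatv x (concatv (fun i => if t i <= 1 then 1 else 0) t)] = t i.
  by rewrite XrE concatv_r.
have hE : ('X_(rshift d (lshift N i)) : {mpoly R[d+(N+N)]}).@[
   concatv x (concatv (fun i => if t i <= 1 then 1 else 0) t)] = if t i <= 1 then 1 else 0.
  by rewrite XrE concatv_l.
have t0 : 0 <= t i by rewrite divr_ge0 ?normr_ge0 ?ltW.
split.
- move=> e; rewrite !inE => /orP [] /eqP ->;
    rewrite !(mevalB, mevalXn') /Th /Tt /U ?tE ?hE ?UpolE ?hq ?tdef //.
  by case: ifP => _; rewrite ?expr1n ?expr0n ?subrr.
- move=> e; rewrite !inE => /orP [/eqP ->|/orP [] /eqP ->].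
  + by rewrite /Tt tE.
  + rewrite mevalM' mevalB meval1 /Th /Tt tE hE.
    by case: ifP => h; rewrite ?mul0r // mul1r subr_ge0.
  + rewrite mevalM' !mevalB meval1 /Th /Tt tE hE.
    case: ifP => h; first by rewrite subrr mul0r.
    by rewrite subr0 mul1r subr_ge0 ltW // ltNge h.
- rewrite !(mevalB, mevalD, mevalM', mevalXn', meval1, mevalC) /Th /Tt tE hE HBE //.
  by case: ifP => _; rewrite ?subrr ?subr0 ?mul0r ?mul1r ?addr0 ?add0r // mulrC.
Qed.


Lemma Rpower_gt0 (b y : R) : 0 < Rpower b y.
Proof. by rewrite /Rpower.Rpower; apply/RltP; apply: Exp_prop.exp_pos. Qed.

Lemma Rpower_nat (b : R) (k : nat) : 0 < b -> Rpower b k%:R = b ^+ k.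
Proof. by move=> hb; rewrite -INRE Rpower.Rpower_pow ?RpowE //; apply/RltP. Qed.

Lemma rpow_int (b : R) (n : int) (D : nat) : 0 < b -> (0 < D)%N ->
  Rpower b ((n%:~R / D%:R) / 2) ^+ (2 * D)%N =
    if (0 <= n) then b ^+ `|n|%N else (b ^+ `|n|%N)^-1.
Proof.
move=> hb hD.
rewrite -Rpower_nat ?Rpower_gt0 // Rpower.Rpower_mult.
have hD' : (D%:R : R) != 0 by rewrite pnatr_eq0 -lt0n.
rewrite RmultE.
have -> : (n%:~R / D%:R / 2 * (2 * D)%N%:R : R) = n%:~R.
  by rewrite natrM; field.
case: n => k /=.
  by rewrite Rpower_nat.
rewrite NegzE mulrNz /= -RoppE Rpower.Rpower_Ropp RinvE -pmulrn Rpower_nat //.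
Qed.


Lemma ADTcase d N (Z : Type) (z : 'I_N -> Z) (beta : 'I_N -> R)
  (r : ('I_d -> R) -> Z -> R) (psi : ('I_d -> R) -> R)
  (hs gs : seq {mpoly R[d]}) (psiq : {mpoly R[d]})
  (hpsi : forall x, psiq.@[x] = psi x)
  (q : 'I_N -> {mpoly R[d]}) (hq : forall x i, (q i).@[x] = r x (z i) ^+ 2)
  (hbeta : forall i, 0 < beta i) (s : rat) :
  s != 0 -> s != 2 ->
  exists P : POP (d + N),
    recast_as_POP (basic_semialg hs gs) (robust_cost (rho_ADT s) r z beta psi) P.
Proof.
move=> s0 s2.
pose sR : R := ratr s.
pose a := `|sR - 2|.
have ha : 0 < a.
  rewrite normr_gt0 subr_eq0 /sR; apply: contra s2 => /eqP h.
  rewrite -(fmorph_eq (ratr : rat -> R)); apply/eqP; apply: (etrans h); exact: (esym (ratr_nat R 2)).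
pose c := a / sR.
pose n := numq s.
pose D := `|denq s|%N.
have hD : (0 < D)%N by rewrite /D absz_gt0 denq_neq0.
have hDen : ((denq s)%:~R : R) = D%:R.
  by rewrite /D; have := denq_gt0 s; case: (denq s) => // k _.
have sRE : sR = (n%:~R / D%:R) by rewrite /sR /n -hDen.
pose bf (u : R) := u / a + 1.
have bf0 u : 0 <= u -> 0 < bf u.
  by move=> u0; rewrite /bf ltr_pwDr // divr_ge0 // ltW.
pose t0 (u : R) := Rpower.Rpower (bf u) (sR / 2).
have rhoE rr b : rho_ADT s rr b = c * (t0 (rr ^+ 2 / b ^+ 2) - 1) by [].
pose Th i : {mpoly R[d+N]} := 'X_(rshift d i).
pose Bp i : {mpoly R[d+N]} := Upol N (q i) (beta i) * (a^-1)%:MP + 1.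
have BpE x y i : (Bp i).@[concatv x y] = bf (r x (z i) ^+ 2 / beta i ^+ 2).
  by rewrite mevalD mevalM' mevalC meval1 UpolE hq.
pose cons (t bb : R) := if 0 <= n then t ^+ (2 * D)%N - bb ^+ `|n|%N
                        else t ^+ (2 * D)%N * bb ^+ `|n|%N - 1.
pose E i := [:: if 0 <= n then Th i ^+ (2 * D)%N - Bp i ^+ `|n|%N
                else Th i ^+ (2 * D)%N * Bp i ^+ `|n|%N - 1].
have EE x y i : (if 0 <= n then Th i ^+ (2 * D)%N - Bp i ^+ `|n|%N
                else Th i ^+ (2 * D)%N * Bp i ^+ `|n|%N - 1).@[concatv x y] =
                cons (y i) (bf (r x (z i) ^+ 2 / beta i ^+ 2)).
  rewrite /cons; case: ifP => _;
  by rewrite ?mevalB ?mevalM' !mevalXn' ?meval1 /Th XrE BpE.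
have t0E u : 0 <= u -> t0 u ^+ (2 * D)%N =
    if 0 <= n then bf u ^+ `|n|%N else (bf u ^+ `|n|%N)^-1.
  by move=> u0; rewrite /t0 sRE rpow_int // bf0.
have bn0 u : 0 <= u -> bf u ^+ `|n|%N != 0 by move=> u0; rewrite expf_neq0 // gt_eqF // bf0.
have tuniq (t u : R) : 0 <= u -> 0 <= t -> cons t (bf u) = 0 -> t = t0 u.
  move=> u0 t0' ; rewrite /cons => h.
  apply/eqP; rewrite -(eqrXn2 (n := (2 * D)%N)) ?muln_gt0 ?hD // ?(ltW (Rpower_gt0 _ _)) //.
  rewrite t0E //; apply/eqP; move: h; case: ifP => _ h.
    by apply/eqP; rewrite -subr_eq0; apply/eqP.
  apply: (mulIf (bn0 u u0)); rewrite mulVf ?bn0 //.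
  by apply/eqP; rewrite -subr_eq0; apply/eqP.
have consE v : 0 <= v -> cons (t0 v) (bf v) = 0.
  move=> v0; rewrite /cons t0E //; case: ifP => h1; case: ifP => h2;
    try (by case: (Bool.diff_true_false (etrans (esym h1) h2)));
    try (by case: (Bool.diff_true_false (etrans (esym h2) h1))).
    by rewrite subrr.
  by rewrite mulVf ?bn0 // subrr.
refine (@recast_meas d N N Z z beta r psi (rho_ADT s) hs gs psiq hpsi
   E (fun i => [:: Th i]) (fun i => c%:MP * (Th i - 1)) _ _).
  move=> x y i H1 H2; have := H1 _ (mem_head _ _); have := H2 _ (mem_head _ _).
  rewrite EE /Th XrE => ht hc.
  rewrite mevalM' mevalC mevalB meval1 XrE rhoE.
  by rewrite (tuniq _ _ (u_ge0 _ _) ht hc).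
move=> x; exists (fun i => t0 (r x (z i) ^+ 2 / beta i ^+ 2)) => i; split.
- move=> e; rewrite inE => /eqP ->; by rewrite EE consE // u_ge0.
- move=> e; rewrite inE => /eqP ->; by rewrite /Th XrE ltW // Rpower_gt0.
- by rewrite mevalM' mevalC mevalB meval1 /Th XrE rhoE.
Qed.

Theorem proposition1
  (d N : nat) (Z : Type) (z : 'I_N -> Z) (beta : 'I_N -> R)
  (r : ('I_d -> R) -> Z -> R) (psi : ('I_d -> R) -> R)
  (hs gs : seq {mpoly R[d]})
  (hbeta : forall i, 0 < beta i)
  (hr2 : forall i, exists q : {mpoly R[d]},
           forall x : 'I_d -> R, q.@[x] = r x (z i) ^+ 2)
  (hpsi : exists q : {mpoly R[d]}, forall x : 'I_d -> R, q.@[x] = psi x) :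
  (forall rho, [\/ rho = rho_TLS, rho = rho_MC, rho = rho_GM | rho = rho_TB] ->
     exists P : POP (d + N),
       recast_as_POP (basic_semialg hs gs) (robust_cost rho r z beta psi) P)
  /\
  (forall rho, rho = rho_L1 \/ rho = rho_HB ->
     exists k : nat, exists P : POP (d + N * k),
       recast_as_POP (basic_semialg hs gs) (robust_cost rho r z beta psi) P)
  /\
  (forall s : rat, s != 0 -> s != 2 ->
     exists k : nat, exists P : POP (d + N * k),
       recast_as_POP (basic_semialg hs gs)
         (robust_cost (rho_ADT s) r z beta psi) P).

Proof.
have [q hq] := fin_all_exists hr2.
have hq' : forall x i, (q i).@[x] = r x (z i) ^+ 2 by move=> x i; apply: hq.
case: hpsi => psiq hpsiq.
split; [|split].
- move=> rho Hrho.
  exact: (@part1 d N Z z beta r psi rho hs gs psiq hpsiq q hq' hbeta Hrho).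
- move=> rho [->|->].
    exists 1%N; rewrite muln1.
    exact: (@L1case d N Z z beta r psi hs gs psiq hpsiq q hq' hbeta).
  exists 2%N; rewrite muln2 -addnn.
  exact: (@HBcase d N Z z beta r psi hs gs psiq hpsiq q hq' hbeta).
- move=> s s0 s2; exists 1%N; rewrite muln1.
  exact: (@ADTcase d N Z z beta r psi hs gs psiq hpsiq q hq' hbeta s s0 s2).
Qed.
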